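(* Let $g:[0,\infty)\to[0,\infty)$ be a function with $g(x)\to\infty$ as $x\to\infty$, and let $h,h':[0,\infty)\to[0,\infty)$ be slowly varying functions. Then there exists $f:[0,\infty)\to[0,\infty)$ such that $\lim_{x\to\infty}f(x)=\infty$, $\lim_{x\to\infty}f(x)/x=0$, $\lim_{x\to\infty}f(x)g(x)/x=\infty$, and $$\lim_{x\to\infty}\frac{h(x)}{h(f(x))}=1,\qquad \lim_{x\to\infty}\frac{h'(x)}{h'(f(x))}=1.$$
   Context: A function $h$ is slowly varying if $h(\lambda x)/h(x)\to1$ as $x\to\infty$ for every $\lambda>0$. *)

(* Defs.v *)
From Stdlib Require Import Reals.
From Coquelicot Require Import Coquelicot.
Open Scope R_scope.

(* Functions [0,oo) -> [0,oo) are modelled as R -> R that are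
   nonnegative on [0,oo); only values on [0,oo) matter. *)
Definition nonneg_on_halfline (f : R -> R) : Prop :=
  forall x, 0 <= x -> 0 <= f x.

Definition slowly_varying (h : R -> R) : Prop :=
  forall lam : R, 0 < lam ->
    is_lim (fun x => h (lam * x) / h x) p_infty (Finite 1).

(* Main.v *)
Require Import Defs.
From Stdlib Require Import Reals.
From Coquelicot Require Import Coquelicot.
From Stdlib Require Import Lra Lia ZArith ClassicalEpsilon.
Open Scope R_scope.

Lemma nat_gt (M : R) : exists K : nat, M < INR K.
Proof.
  destruct (archimed M) as [H1 _].
  exists (Z.to_nat (up M)).
  destruct (Z.lt_ge_cases (up M) 0) as [Hn|Hp].
  - replace (Z.to_nat (up M)) with O by lia. simpl. apply IZR_lt in Hn. lra.
  - rewrite INR_IZR_INZ, Z2Nat.id by lia. lra.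
Qed.

Lemma bound_ge (x : R) (K : nat) : INR K <= x -> (K <= Z.to_nat (up x))%nat.
Proof.
  intros H. destruct (archimed x) as [H1 _].
  destruct (le_lt_dec K (Z.to_nat (up x))) as [h|h]; auto.
  exfalso. assert (Hz : (up x < Z.of_nat K)%Z) by lia.
  apply IZR_lt in Hz. rewrite <- INR_IZR_INZ in Hz. lra.
Qed.

Lemma INR_le_pow2 (n : nat) : INR n <= 2 ^ n.
Proof.
  induction n. simpl; lra.
  rewrite S_INR. simpl. assert (1 <= 2 ^ n) by (apply pow_R1_Rle; lra). lra.
Qed.

Section K.
Variables (N : nat -> R) (g : R -> R).
Definition cond (n : nat) (x : R) := N n <= x /\ 2 ^ n * INR n <= g x.

Fixpoint kk (n : nat) (x : R) : nat :=
  match n with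
  | O => O
  | S m => if Rle_dec (N (S m)) x then
             if Rle_dec (2 ^ (S m) * INR (S m)) (g x) then S m else kk m x
           else kk m x
  end.

Lemma kk_ge n m x : (m <= n)%nat -> cond m x -> (m <= kk n x)%nat.
Proof.
  induction n; intros Hm Hc; simpl.
  - lia.
  - destruct Hc as [H1 H2].
    destruct (Nat.eq_dec m (S n)) as [->|Hne].
    + destruct (Rle_dec _ _); [|contradiction]. destruct (Rle_dec _ _); [lia|contradiction].
    + assert (m <= kk n x)%nat by (apply IHn; [lia| split; auto]).
      destruct (Rle_dec _ _); [destruct (Rle_dec _ _)|]; lia.
Qed.

Lemma kk_spec n x : kk n x = O \/ cond (kk n x) x.
Proof.
  induction n; simpl; auto.
  destruct (Rle_dec _ _); [destruct (Rle_dec _ _)|]; auto.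
  right; split; auto.
Qed.
End K.

Theorem lemma1 (g h h' : R -> R)
  (Hg0 : nonneg_on_halfline g) (Hg : is_lim g p_infty p_infty)
  (Hh0 : nonneg_on_halfline h) (Hh'0 : nonneg_on_halfline h')
  (Hh : slowly_varying h) (Hh' : slowly_varying h') :
  exists f : R -> R,
    nonneg_on_halfline f /\
    is_lim f p_infty p_infty /\
    is_lim (fun x => f x / x) p_infty (Finite 0) /\
    is_lim (fun x => f x * g x / x) p_infty p_infty /\
    is_lim (fun x => h x / h (f x)) p_infty (Finite 1) /\
    is_lim (fun x => h' x / h' (f x)) p_infty (Finite 1).
Proof.
  assert (exN : forall k : nat, exists Nk, 2 ^ k * 2 ^ k <= Nk /\ 0 < Nk /\
     forall x, Nk <= x -> Rabs (h x / h (x / 2 ^ k) - 1) < / (INR k + 1)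
                       /\ Rabs (h' x / h' (x / 2 ^ k) - 1) < / (INR k + 1)).
  { intros k.
    assert (Hp : 0 < 2 ^ k) by (apply pow_lt; lra).
    assert (Hep : 0 < / (INR k + 1)) by (apply Rinv_0_lt_compat; pose proof (pos_INR k); lra).
    pose proof (proj2 (is_lim_spec _ _ _) (Hh _ Hp) (mkposreal _ Hep)) as [M1 HM1].
    pose proof (proj2 (is_lim_spec _ _ _) (Hh' _ Hp) (mkposreal _ Hep)) as [M2 HM2].
    simpl in HM1, HM2.
    exists (Rmax (2 ^ k * 2 ^ k) (Rmax 1 (2 ^ k * (Rmax M1 M2 + 1)))).
    split; [apply Rmax_l|]. split.
    { eapply Rlt_le_trans; [|apply Rmax_r]. eapply Rlt_le_trans; [|apply Rmax_l]. lra. }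
    intros x Hx.
    assert (Hy : Rmax M1 M2 < x / 2 ^ k).
    { assert (2 ^ k * (Rmax M1 M2 + 1) <= x).
      { eapply Rle_trans; [|exact Hx]. eapply Rle_trans; [|apply Rmax_r]. apply Rmax_r. }
      apply Rmult_lt_reg_l with (2 ^ k); auto. field_simplify; lra. }
    assert (Hxe : 2 ^ k * (x / 2 ^ k) = x) by (field; lra).
    split.
    - specialize (HM1 (x / 2 ^ k)). rewrite Hxe in HM1. apply HM1.
      pose proof (Rmax_l M1 M2). lra.
    - specialize (HM2 (x / 2 ^ k)). rewrite Hxe in HM2. apply HM2.
      pose proof (Rmax_r M1 M2). lra. }
  pose (N := fun k => proj1_sig (constructive_indefinite_description _ (exN k))).
  assert (HN : forall k, 2 ^ k * 2 ^ k <= N k /\ 0 < N k /\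
     forall x, N k <= x -> Rabs (h x / h (x / 2 ^ k) - 1) < / (INR k + 1)
                       /\ Rabs (h' x / h' (x / 2 ^ k) - 1) < / (INR k + 1)).
  { intros k. exact (proj2_sig (constructive_indefinite_description _ (exN k))). }
  clearbody N. clear exN.
  pose (k := fun x => kk N g (Z.to_nat (up x)) x).
  assert (Hk : forall K : nat, exists X, forall x, X < x ->
             (S K <= k x)%nat /\ cond N g (k x) x /\ 0 < x).
  { intros K.
    pose proof (proj2 (is_lim_spec _ _ _) Hg (2 ^ S K * INR (S K))) as [X0 HX0].
    exists (Rmax X0 (Rmax (N (S K)) (INR (S K)))). intros x Hx.
    pose proof (Rmax_l X0 (Rmax (N (S K)) (INR (S K)))).
    pose proof (Rmax_r X0 (Rmax (N (S K)) (INR (S K)))).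
    pose proof (Rmax_l (N (S K)) (INR (S K))).
    pose proof (Rmax_r (N (S K)) (INR (S K))).
    assert (Hc : cond N g (S K) x).
    { split. lra. left. apply HX0. lra. }
    assert (HSK : (S K <= k x)%nat).
    { apply kk_ge; auto. apply bound_ge. lra. }
    split; auto.
    destruct (kk_spec N g (Z.to_nat (up x)) x) as [E|E].
    - unfold k in HSK. lia.
    - split; [exact E|]. pose proof (proj2 (HN (S K))) as [? _]. lra. }
  assert (Hpos : forall x, 0 < 2 ^ (k x)) by (intros; apply pow_lt; lra).
  exists (fun x => x / 2 ^ (k x)).
  split; [|split; [|split; [|split]]].
  - intros x Hx. unfold Rdiv. apply Rmult_le_pos; auto. left; apply Rinv_0_lt_compat; auto.
  - apply is_lim_spec. intros M. destruct (nat_gt M) as [K HK].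
    destruct (Hk K) as [X HX]. exists X. intros x Hx.
    destruct (HX x Hx) as [H1 [[H2 H3] H4]].
    specialize (HN (k x)) as [H5 _].
    assert (H6 : INR K <= INR (k x)) by (apply le_INR; lia).
    pose proof (INR_le_pow2 (k x)). specialize (Hpos x).
    assert (2 ^ k x <= x / 2 ^ k x).
    { apply Rmult_le_reg_l with (2 ^ k x); auto. field_simplify; lra. }
    lra.
  - apply is_lim_spec. intros eps. destruct (nat_gt (/ eps)) as [K HK].
    destruct (Hk K) as [X HX]. exists X. intros x Hx.
    destruct (HX x Hx) as [H1 [[H2 H3] H4]].
    assert (H6 : INR K <= INR (k x)) by (apply le_INR; lia).
    pose proof (INR_le_pow2 (k x)). specialize (Hpos x).
    pose proof (cond_pos eps).
    replace (x / 2 ^ k x / x - 0) with (/ 2 ^ k x) by (field; lra).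
    rewrite Rabs_pos_eq by (left; apply Rinv_0_lt_compat; auto).
    apply Rmult_lt_reg_l with (2 ^ k x); auto. rewrite Rinv_r by lra.
    apply Rmult_lt_reg_l with (/ eps). apply Rinv_0_lt_compat; lra.
    field_simplify; try lra.
  - apply is_lim_spec. intros M. destruct (nat_gt M) as [K HK].
    destruct (Hk K) as [X HX]. exists X. intros x Hx.
    destruct (HX x Hx) as [H1 [[H2 H3] H4]].
    assert (H6 : INR K <= INR (k x)) by (apply le_INR; lia).
    specialize (Hpos x).
    replace (x / 2 ^ k x * g x / x) with (g x / 2 ^ k x) by (field; lra).
    assert (INR (k x) <= g x / 2 ^ k x).
    { apply Rmult_le_reg_l with (2 ^ k x); auto. field_simplify; lra. }
    lra.
  - split; apply is_lim_spec; intros eps; destruct (nat_gt (/ eps)) as [K HK];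
    destruct (Hk K) as [X HX]; exists X; intros x Hx;
    destruct (HX x Hx) as [H1 [[H2 H3] H4]];
    assert (H6 : INR K <= INR (k x)) by (apply le_INR; lia);
    pose proof (cond_pos eps);
    destruct (proj2 (proj2 (HN (k x))) x H2) as [E1 E2];
    assert (Hlt : / (INR (k x) + 1) < eps) by
      (apply Rmult_lt_reg_l with (INR (k x) + 1); [pose proof (pos_INR (k x)); lra|];
       rewrite Rinv_r by (pose proof (pos_INR (k x)); lra);
       apply Rmult_lt_reg_l with (/ eps); [apply Rinv_0_lt_compat; lra|];
       field_simplify; lra);
    lra.
Qed.
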